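(* Assume (A1) and (A2). Then for any $n\geq 1$ there exists $C(n)<+\infty$ such that for any $N\geq 1$ and $j\in\{1,2\}$, $$ \mathbb{E}\big[(\gamma_{n,j}^N(1) - \gamma_{n,j}(1))^2\big] \leq \frac{C(n)}{N}. $$
   Context: Notation: $\mathcal U=\mathbb R^d$, $\mathcal V=\mathcal U\times\mathcal U$, $v=(u_1,u_2)$. For a probability $\mu$ on $\mathcal V$, $\mu_j$ is its $j$-th marginal, $\mu(\varphi_j)=\int\varphi(u_j)\mu(dv)$. Coupled particle system. Given: potentials $G_p:\mathcal U\to(0,\infty)$, $p\ge0$; a probability $\eta_0$ on $\mathcal V$; Markov kernels $M_n$ from $\mathcal V$ to $\mathcal V$, $n\ge1$, with Markov kernels $M_{n,j}$ on $\mathcal U$ ($j=1,2$) satisfying $\int\varphi(u'_j)M_n(v,dv')=\int\varphi(u_j')M_{n,j}(u_j,du_j')$ for all bounded measurable $\varphi$. Define $\gamma_{n,j}(\varphi)=\int \varphi(u_n)\prod_{p=0}^{n-1}G_p(u_p)\,\eta_{0,j}(du_0)\prod_{p=1}^nM_{p,j}(u_{p-1},du_p)$. For a probability $\mu$ on $\mathcal V$ let $G_{n,j,\mu}(u)=G_n(u)/\mu_j(G_n)$, $\bar G_{n,\mu}(v)=G_{n,1,\mu}(u_1)\wedge G_{n,2,\mu}(u_2)$ and $$\bar\Phi_n(\mu)(dv')=\mu\big(\bar G_{n-1,\mu}M_n(\cdot,dv')\big)+\big(1-\mu(\bar G_{n-1,\mu})\big)\int\!\!\int \frac{(G_{n-1,1,\mu}-\bar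 G_{n-1,\mu})(v)}{\mu(G_{n-1,1,\mu}-\bar G_{n-1,\mu})}\frac{(G_{n-1,2,\mu}-\bar G_{n-1,\mu})(\tilde v)}{\mu(G_{n-1,2,\mu}-\bar G_{n-1,\mu})}M_n((u_1,\tilde u_2),dv')\mu(dv)\mu(d\tilde v)$$ (second term absent if $\mu(\bar G_{n-1,\mu})=1$). With $N$ particles: $v_0^i\stackrel{iid}{\sim}\eta_0$, and for $p\ge1$ conditionally independently $v_p^i\sim\bar\Phi_p(\bar\eta^N_{p-1})$, where $\bar\eta^N_p=\frac1N\sum_{i=1}^N\delta_{v_p^i}$ has $j$-th marginal $\eta^N_{p,j}$. Set $\gamma^N_{n,j}(1)=\prod_{p=0}^{n-1}\eta^N_{p,j}(G_p)$; $\mathbb E$ is expectation w.r.t. this particle system. (A1): there exist $c>1$, $C>0$ such that for all $n\ge0$, $x,x'$: $c^{-1}<G_n(x)<c$ and $|G_n(x)-G_n(x')|\le C|x-x'|$. (A2): for each $n$ there is $C_n>0$ such that for all $u,u'$, $j\in\{1,2\}$ and bounded Lipschitz $\varphi$, $|M_{n,j}(\varphi)(u)-M_{n,j}(\varphi)(u')|\le C_n\sup|\varphi|\,|u-u'|$. *)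

(* Defs.v *)
From HB Require Import structures.
From mathcomp Require Import all_boot all_order all_algebra.
From mathcomp Require Import all_classical all_reals all_analysis.
Set Implicit Arguments. Unset Strict Implicit. Unset Printing Implicit Defensive.
Import Order.TTheory GRing.Theory Num.Theory.
Local Open Scope ring_scope.
Local Open Scope classical_set_scope.

(* The state space U = R^d, as d-tuples of reals with the product (= Borel)
   sigma-algebra; V = U * U with the product sigma-algebra. *)
Definition Ud (R : realType) (d : nat) := (d.-tuple R).
Definition Vd (R : realType) (d : nat) := (d.-tuple R * d.-tuple R)%type.

Definition dist (R : realType) (d : nat) (x y : d.-tuple R) : R :=
  Num.sqrt (\sum_(i < d) (tnth x i - tnth y i) ^+ 2).

Definition compj (R : realType) (d : nat) (j : nat) (v : Vd R d) : d.-tuple R :=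
  if j == 1%N then v.1 else v.2.

Definition emp (R : realType) (d : nat) (N : nat) (x : nat -> Vd R d)
  : {measure set Vd R d -> \bar R} :=
  mscale (N%:R^-1)%:nng (msum (fun k => \d_(x k)) N).


Local Open Scope ereal_scope.

Definition muR (R : realType) (d : nat) (mu : {measure set Vd R d -> \bar R})
  (f : Vd R d -> R) : R := fine (\int[mu]_v (f v)%:E).

Definition Gj (R : realType) (d : nat) (G : nat -> d.-tuple R -> R) (n j : nat)
  (mu : {measure set Vd R d -> \bar R}) (u : d.-tuple R) : R :=
  (G n u / muR mu (fun v => G n (compj j v)))%R.

Definition Gbar (R : realType) (d : nat) (G : nat -> d.-tuple R -> R) (n : nat)
  (mu : {measure set Vd R d -> \bar R}) (v : Vd R d) : R :=
  Order.min (Gj G n 1 mu v.1) (Gj G n 2 mu v.2).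

(* PhiInt G M n mu F  =  \int F d(bar Phi_n(mu)), for nonnegative F,
   written out from the defining formula of bar Phi_n (n >= 1). *)
Definition PhiInt (R : realType) (d : nat) (G : nat -> d.-tuple R -> R)
  (M : nat -> R.-pker (Vd R d) ~> (Vd R d)) (n : nat)
  (mu : {measure set Vd R d -> \bar R}) (F : Vd R d -> \bar R) : \bar R :=
  let Gb := Gbar G n.-1 mu in
  let w1 := fun v : Vd R d => (Gj G n.-1 1 mu v.1 - Gb v)%R in
  let w2 := fun v : Vd R d => (Gj G n.-1 2 mu v.2 - Gb v)%R in
  \int[mu]_v ((Gb v)%:E * \int[M n v]_y F y)
  + (if muR mu Gb == 1%R then 0 else
     (1 - muR mu Gb)%:E *
       \int[mu]_v (\int[mu]_w
          (((w1 v / muR mu w1) * (w2 w / muR mu w2))%:E *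
            \int[M n (v.1, w.2)]_y F y))).

(* a default point of V (fills unused indices; never integrated against) *)
Definition ptV (R : realType) (d : nat) : Vd R d :=
  ([tuple (0:R)%R | _ < d], [tuple (0:R)%R | _ < d]).

Definition upd (T : Type) (x : nat -> T) (k : nat) (a : T) : nat -> T :=
  fun i => if i == k then a else x i.

(* intN Q k F x : integrate F over coordinates 0..k-1 of a configuration,
   each coordinate independently with law given by the integral Q
   (i.e. integration against the k-fold product of the law). *)
Fixpoint intN (R : realType) (T : Type) (Q : (T -> \bar R) -> \bar R) (k : nat)
  (F : (nat -> T) -> \bar R) (x : nat -> T) : \bar R :=
  match k with
  | 0 => F x
  | k'.+1 => Q (fun a => intN Q k' F (upd x k' a))
  end.

(* run the particle system from time p (history h : time -> particle -> V
   filled up to time p) for k more steps, then evaluate F on the history. *)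
Fixpoint run (R : realType) (d : nat) (G : nat -> d.-tuple R -> R)
  (M : nat -> R.-pker (Vd R d) ~> (Vd R d)) (N : nat) (k p : nat)
  (h : nat -> nat -> Vd R d) (F : (nat -> nat -> Vd R d) -> \bar R) : \bar R :=
  match k with
  | 0 => F h
  | k'.+1 =>
      intN (PhiInt G M p.+1 (emp N (h p))) N
        (fun x => run G M N k' p.+1 (upd h p.+1 x) F) (fun _ => ptV R d)
  end.

(* Expectation, w.r.t. the N-particle coupled system, of a nonnegative
   function F of the particle history at times 0..m. *)
Definition Epart (R : realType) (d : nat) (eta0 : probability (Vd R d) R)
  (G : nat -> d.-tuple R -> R) (M : nat -> R.-pker (Vd R d) ~> (Vd R d))
  (N m : nat) (F : (nat -> nat -> Vd R d) -> \bar R) : \bar R :=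
  intN (fun f => \int[eta0]_v f v) N
    (fun x0 => run G M N m 0 (fun _ => x0) F) (fun _ => ptV R d).

Definition gammaN (R : realType) (d : nat) (G : nat -> d.-tuple R -> R)
  (N n j : nat) (h : nat -> nat -> Vd R d) : R :=
  (\prod_(p < n) muR (emp N (h p)) (fun v => G p (compj j v)))%R.

(* fk k p u = \int prod_{q=p}^{p+k-1} G_q(u_q) prod M_{q+1,j}(u_q,du_{q+1}), u_p = u *)
Fixpoint fk (R : realType) (d : nat) (G : nat -> d.-tuple R -> R)
  (Mj : nat -> nat -> R.-pker (Ud R d) ~> (Ud R d)) (j : nat) (k p : nat)
  (u : d.-tuple R) : \bar R :=
  match k with
  | 0 => 1
  | k'.+1 => (G p u)%:E * \int[Mj j p.+1 u]_u' fk G Mj j k' p.+1 u'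
  end.

Definition gamma (R : realType) (d : nat) (eta0 : probability (Vd R d) R)
  (G : nat -> d.-tuple R -> R) (Mj : nat -> nat -> R.-pker (Ud R d) ~> (Ud R d))
  (n j : nat) : R :=
  fine (\int[eta0]_v fk G Mj j n 0 (compj j v)).

Definition supnorm (R : realType) (T : Type) (phi : T -> R) : R :=
  sup [set `|phi x|%R | x in [set: T]].

Definition lipschitz_fun (R : realType) (d : nat) (phi : d.-tuple R -> R) : Prop :=
  exists L : R, forall x y, (`|phi x - phi y| <= L * dist x y)%R.

(* Main.v *)
Require Import Defs.
From HB Require Import structures.
From mathcomp Require Import all_boot all_order all_algebra.
From mathcomp Require Import all_classical all_reals all_analysis.
From mathcomp Require Import measurable_realfun.
From mathcomp Require Import ring lra.
Set Implicit Arguments. Unset Strict Implicit. Unset Printing Implicit Defensive.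
Import Order.TTheory GRing.Theory Num.Theory.
Local Open Scope ring_scope.
Local Open Scope classical_set_scope.
Section Core.
Variables (R : realType) (T : Type).

Definition rs (g : T -> R) (N k : nat) (x : nat -> T) : R := \sum_(k <= i < N) g (x i).

Lemma rs_upd g N k x a : (k < N)%N -> rs g N k (upd x k a) = g a + rs g N k.+1 x.
Proof.
move=> kN; rewrite /rs big_ltn // /upd eqxx; congr (_ + _).
by apply: eq_big_nat => i /andP[ki _]; rewrite gtn_eqF.
Qed.

Lemma intN_quad (Q : (T -> \bar R) -> \bar R) (g : T -> R) (m e2 : R) N :
  (forall u0 u1 u2, Q (fun a => (u0 + u1 * g a + u2 * g a ^+ 2)%:E) = (u0 + u1 * m + u2 * e2)%:E) ->
  forall q0 q1 q2 k x, (k <= N)%N ->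
  intN Q k (fun x => (q0 + q1 * rs g N 0 x + q2 * rs g N 0 x ^+ 2)%:E) x =
  (q0 + q1 * (rs g N k x + k%:R * m) + q2 * ((rs g N k x + k%:R * m) ^+ 2 + k%:R * (e2 - m ^+ 2)))%:E.
Proof.
move=> hQ q0 q1 q2; elim=> [|k IH] x kN /=.
  by rewrite !mul0r !addr0.
rewrite (_ : (fun a => _) = fun a => ((q0 + q1 * (rs g N k.+1 x + k%:R * m) + q2 * ((rs g N k.+1 x + k%:R * m) ^+ 2 + k%:R * (e2 - m ^+ 2))) + (q1 + 2 * q2 * (rs g N k.+1 x + k%:R * m)) * g a + q2 * g a ^+ 2)%:E).
  by rewrite hQ -natr1; congr (_%:E); ring.
apply: funext => a; rewrite IH ?(ltnW kN) // rs_upd //; congr (_%:E); ring.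
Qed.

Lemma rsN g N x : rs g N N x = 0.
Proof. by rewrite /rs big_geq. Qed.

End Core.
Lemma runS (R : realType) d G M N k p h (F : (nat -> nat -> Vd R d) -> \bar R) :
  run G M N k.+1 p h F = run G M N k p h (fun h' => intN (PhiInt G M (p + k)%N.+1 (emp N (h' (p + k)%N))) N (fun x => F (upd h' (p + k)%N.+1 x)) (fun _ => ptV R d)).
Proof.
elim: k p h => [|k IH] p h; first by rewrite addn0.
transitivity (intN (PhiInt G M p.+1 (emp N (h p))) N (fun x => run G M N k.+1 p.+1 (upd h p.+1 x) F) (fun _ => ptV R d)); first by [].
congr (intN _ N _ _); apply: funext => x; by rewrite IH addSnnS.
Qed.

Lemma EpartS (R : realType) d eta0 G M N m (F : (nat -> nat -> Vd R d) -> \bar R) :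
  Epart eta0 G M N m.+1 F = Epart eta0 G M N m (fun h' => intN (PhiInt G M m.+1 (emp N (h' m))) N (fun x => F (upd h' m.+1 x)) (fun _ => ptV R d)).
Proof.
rewrite /Epart; congr (intN _ N _ _); apply: funext => x0; by rewrite runS add0n.
Qed.

Local Open Scope ereal_scope.

Definition Qmono (R : realType) T (Q : (T -> \bar R) -> \bar R) := forall F1 F2, (forall x, 0 <= F1 x) -> (forall x, F1 x <= F2 x) -> Q F1 <= Q F2.
Definition Qpos (R : realType) T (Q : (T -> \bar R) -> \bar R) := forall F, (forall x, 0 <= F x) -> 0 <= Q F.

Lemma intN_pos (R : realType) T (Q : (T -> \bar R) -> \bar R) : Qpos Q ->
  forall k F x, (forall y, 0 <= F y) -> 0 <= intN Q k F x.
Proof.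
move=> hp; elim=> [|k IH] F x F0 /=; first exact: F0.
by apply: hp => a; apply: IH.
Qed.

Lemma intN_mono (R : realType) T (Q : (T -> \bar R) -> \bar R) : Qmono Q -> Qpos Q ->
  forall k F1 F2 x, (forall y, 0 <= F1 y) -> (forall y, F1 y <= F2 y) -> intN Q k F1 x <= intN Q k F2 x.
Proof.
move=> hm hp; elim=> [|k IH] F1 F2 x F0 F12 /=; first exact: F12.
apply: hm => a; first exact: intN_pos.
exact: IH.
Qed.

Lemma run_pos (R : realType) d G M N : (forall n y, Qpos (PhiInt G M n.+1 (emp N y))) ->
  forall k p h (F : (nat -> nat -> Vd R d) -> \bar R), (forall y, 0 <= F y) -> 0 <= run G M N k p h F.
Proof.
move=> hp; elim=> [|k IH] p h F F0 /=; first exact: F0.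
apply: intN_pos => // x; exact: IH.
Qed.

Lemma run_mono (R : realType) d G M N : (forall n y, Qmono (PhiInt G M n.+1 (emp N y))) -> (forall n y, Qpos (PhiInt G M n.+1 (emp N y))) ->
  forall k p h (F1 F2 : (nat -> nat -> Vd R d) -> \bar R), (forall y, 0 <= F1 y) -> (forall y, F1 y <= F2 y) -> run G M N k p h F1 <= run G M N k p h F2.
Proof.
move=> hm hp; elim=> [|k IH] p h F1 F2 F0 F12 /=; first exact: F12.
apply: intN_mono => // x; first exact: run_pos.
exact: IH.
Qed.

Lemma int_mono d (T : measurableType d) (R : realType) (mu : {measure set T -> \bar R}) (F1 F2 : T -> \bar R) :
  (forall x, 0 <= F1 x) -> (forall x, F1 x <= F2 x) -> \int[mu]_x F1 x <= \int[mu]_x F2 x.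
Proof.
move=> F0 F12.
have F20 : forall x, 0 <= F2 x by move=> x; exact: le_trans (F0 x) (F12 x).
rewrite !ge0_integralTE //.
apply: le_ereal_sup => _ [h /= hF1 <-]; exists h => //= x.
exact: le_trans (hF1 x) (F12 x).
Qed.

Lemma Epart_mono (R : realType) d eta0 G M N : (forall n y, Qmono (PhiInt G M n.+1 (emp N y))) -> (forall n y, Qpos (PhiInt G M n.+1 (emp N y))) ->
  forall m (F1 F2 : (nat -> nat -> Vd R d) -> \bar R), (forall y, 0 <= F1 y) -> (forall y, F1 y <= F2 y) -> Epart eta0 G M N m F1 <= Epart eta0 G M N m F2.
Proof.
move=> hm hp m F1 F2 F0 F12; rewrite /Epart.
apply: intN_mono.
- move=> f1 f2 f0 f12; exact: int_mono.
- move=> f f0; exact: integral_ge0.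
- move=> x; exact: run_pos.
- move=> x; exact: run_mono.
Qed.
Local Close Scope ereal_scope.
Lemma maxpn (R : realType) (x : R) : Num.max x 0 - Num.max (- x) 0 = x.
Proof.
by rewrite !maxEle; case: (lerP x 0) => h1; case: (lerP (-x) 0) => h2; lra.
Qed.

Section Emp.
Variables (R : realType) (d : nat).
Local Open Scope ereal_scope.

Lemma emp_ge0 N (y : nat -> Vd R d) (f : Vd R d -> \bar R) :
  measurable_fun setT f -> (forall v, 0 <= f v) ->
  \int[emp N y]_v f v = (N%:R^-1)%:E * \sum_(i < N) f (y i).
Proof.
move=> mf f0; rewrite /emp ge0_integral_mscale //= ge0_integral_measure_sum //.
congr (_ * _); apply: eq_bigr => i _; by rewrite integral_dirac // diracE in_setT mul1e.
Qed.

Lemma emp_real N y (g : Vd R d -> R) : measurable_fun setT g ->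
  \int[emp N y]_v (g v)%:E = (N%:R^-1 * \sum_(i < N) g (y i))%:E.
Proof.
move=> mg.
have mng : measurable_fun setT (fun v => (- g v)%R).
  exact: measurable_funN.
have mpos : measurable_fun setT (fun v => (Num.max (g v) 0%R)%:E).
  by apply/measurable_EFinP; apply: measurable_maxr => //; exact: measurable_cst.
have mneg : measurable_fun setT (fun v => (Num.max (- g v)%R 0%R)%:E).
  by apply/measurable_EFinP; apply: measurable_maxr => //; exact: measurable_cst.
rewrite integralE.
rewrite (eq_integral (fun v => (Num.max (g v) 0%R)%:E)); last by move=> v _; rewrite funeposE EFin_max.
rewrite [X in _ - X](eq_integral (fun v => (Num.max (- g v)%R 0%R)%:E)); last by move=> v _; rewrite funenegE EFin_max.
rewrite !emp_ge0 // ?sumEFin -?EFinM -?EFinB; last 2 first.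
  by move=> v; rewrite lee_fin le_max lexx orbT.
  by move=> v; rewrite lee_fin le_max lexx orbT.
congr (_%:E); rewrite -mulrBr -sumrB; congr (_ * _)%R; apply: eq_bigr => i _.
exact: maxpn.
Qed.

End Emp.
Local Close Scope ereal_scope.
Section Prob.
Context (R : realType) d' (T : measurableType d') (mu : {measure set T -> \bar R}).
Hypothesis mu1 : mu setT = 1%E.

Definition bdd (h : T -> R) := exists B, forall x, `|h x| <= B.

Lemma int_bdd h : measurable_fun setT h -> bdd h -> mu.-integrable setT (EFin \o h).
Proof.
move=> mh [B hB]; apply: measurable_bounded_integrable => //.
  by rewrite mu1 ltry.
exists B; split; first exact: num_real.
move=> M hM x _ /=; exact: le_trans (hB x) (ltW hM).
Qed.

Lemma bdd_cst k : bdd (fun _ => k).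
Proof. by exists `|k|. Qed.

Lemma bddD a b : bdd a -> bdd b -> bdd (fun x => a x + b x).
Proof.
move=> [A hA] [B hB]; exists (A + B) => x.
exact: le_trans (ler_normD _ _) (lerD (hA x) (hB x)).
Qed.

Lemma bddM a b : bdd a -> bdd b -> bdd (fun x => a x * b x).
Proof.
move=> [A hA] [B hB]; exists (A * B) => x.
rewrite normrM; apply: ler_pM => //; exact: hA.
Qed.

Lemma intD (a b : T -> R) : measurable_fun setT a -> bdd a -> measurable_fun setT b -> bdd b ->
  (\int[mu]_x (a x + b x)%:E = \int[mu]_x (a x)%:E + \int[mu]_x (b x)%:E)%E.
Proof.
move=> ma ba mb bb.
under eq_integral do rewrite EFinD.
by apply: integralD => //; apply: int_bdd.
Qed.

Lemma intZ k (a : T -> R) : measurable_fun setT a -> bdd a ->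
  (\int[mu]_x (k * a x)%:E = k%:E * \int[mu]_x (a x)%:E)%E.
Proof.
move=> ma ba.
under eq_integral do rewrite EFinM.
by apply: integralZl => //; apply: int_bdd.
Qed.

Lemma intC k : (\int[mu]_x k%:E = k%:E)%E.
Proof. by rewrite integral_cst // mu1 mule1. Qed.

Definition Ex (h : T -> R) := fine (\int[mu]_x (h x)%:E).

Lemma int_fin a : measurable_fun setT a -> bdd a -> (\int[mu]_x (a x)%:E)%E \is a fin_num.
Proof. by move=> ma ba; apply: integrable_fin_num => //; apply: int_bdd. Qed.

Lemma intEx a : measurable_fun setT a -> bdd a -> (\int[mu]_x (a x)%:E)%E = (Ex a)%:E.
Proof. by move=> ma ba; rewrite /Ex fineK //; apply: int_fin. Qed.

Lemma Ex_quad (f : T -> R) u0 u1 u2 : measurable_fun setT f -> bdd f ->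
  (\int[mu]_x (u0 + u1 * f x + u2 * f x ^+ 2)%:E)%E =
  (u0 + u1 * Ex f + u2 * Ex (fun x => f x ^+ 2))%:E.
Proof.
move=> mf bf.
have mf2 : measurable_fun setT (fun x => f x ^+ 2).
  by under eq_fun do rewrite expr2; apply: measurable_funM.
have bf2 : bdd (fun x => f x ^+ 2) by under eq_fun do rewrite expr2; apply: bddM.
have mc : forall k : R, measurable_fun setT (fun _ : T => k) by move=> k; exact: measurable_cst.
have m1 : measurable_fun setT (fun x => u1 * f x) by exact: (measurable_funM (mc u1) mf).
have m2 : measurable_fun setT (fun x => u2 * f x ^+ 2) by exact: (measurable_funM (mc u2) mf2).
have b1 : bdd (fun x => u1 * f x) by apply: bddM => //; apply: bdd_cst.
have b2 : bdd (fun x => u2 * f x ^+ 2) by apply: bddM => //; apply: bdd_cst.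
rewrite intD //; last 2 first.
- exact: (measurable_funD (mc u0) m1).
- by apply: bddD => //; apply: bdd_cst.
rewrite intD //.
rewrite intC intZ // intZ // !intEx //.
all: try exact: bdd_cst.
Qed.

Lemma Ex_bnd (f : T -> R) B : measurable_fun setT f -> (forall x, 0 <= f x <= B) -> 0 <= Ex f <= B.
Proof.
move=> mf hf; apply/andP; split.
  by apply: fine_ge0; apply: integral_ge0 => x _; rewrite lee_fin; case/andP: (hf x).
have bf : bdd f by exists B => x; case/andP: (hf x) => h0 h1; rewrite ger0_norm.
rewrite -lee_fin -intEx // -(intC B); apply: int_mono => x; rewrite lee_fin; by case/andP: (hf x).
Qed.

End Prob.
Local Close Scope ereal_scope.
Section Phi.
Variables (R : realType) (d : nat) (G : nat -> d.-tuple R -> R)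
  (M : nat -> R.-pker (Vd R d) ~> (Vd R d))
  (Mj : nat -> nat -> R.-pker (Ud R d) ~> (Ud R d)).
Hypothesis hGpos : forall p u, 0 < G p u.
Hypothesis hGmeas : forall p, measurable_fun [set: d.-tuple R] (G p).
Hypothesis hmarg : forall n : nat, (1 <= n)%N ->
     forall j : nat, (j = 1%N \/ j = 2%N) ->
     forall (v : Vd R d) (phi : d.-tuple R -> R),
       measurable_fun [set: d.-tuple R] phi -> bounded_fun phi ->
       (\int[M n v]_y (phi (compj j y))%:E = \int[Mj j n (compj j v)]_u (phi u)%:E)%E.

Lemma meas_compj j : measurable_fun [set: Vd R d] (compj j).
Proof. rewrite /compj; case: (j == 1%N); [exact: measurable_fst | exact: measurable_snd]. Qed.

Lemma meas_Gc p j : measurable_fun [set: Vd R d] (fun v => G p (compj j v)).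
Proof. exact: measurableT_comp (hGmeas p) (meas_compj j). Qed.

Definition eta N (y : nat -> Vd R d) j p := N%:R^-1 * \sum_(i < N) G p (compj j (y i)).

Lemma muR_G N y j p : muR (emp N y) (fun v => G p (compj j v)) = eta N y j p.
Proof. by rewrite /muR emp_real //; exact: meas_Gc. Qed.

Lemma eta_gt0 N y j p : (0 < N)%N -> 0 < eta N y j p.
Proof.
move=> N0; rewrite /eta; apply: mulr_gt0; first by rewrite invr_gt0 ltr0n.
case: N N0 y => [//|N] _ y; rewrite big_ord_recl.
apply: ltr_wpDr; first by apply: sumr_ge0 => i _; exact: ltW.
exact: hGpos.
Qed.


Lemma Gj_eq N y m k u : Gj G m k (emp N y) u = G m u / eta N y k m.
Proof. by rewrite /Gj muR_G. Qed.

Lemma meas_Gj1 N y m : measurable_fun [set: Vd R d] (fun v => Gj G m 1 (emp N y) v.1).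
Proof.
rewrite /Gj; apply: (measurable_funM (f := fun v : Vd R d => G m v.1)); last exact: measurable_cst.
exact: measurableT_comp (hGmeas m) measurable_fst.
Qed.

Lemma meas_Gj2 N y m : measurable_fun [set: Vd R d] (fun v => Gj G m 2 (emp N y) v.2).
Proof.
rewrite /Gj; apply: (measurable_funM (f := fun v : Vd R d => G m v.2)); last exact: measurable_cst.
exact: measurableT_comp (hGmeas m) measurable_snd.
Qed.

Lemma meas_Gb N y m : measurable_fun [set: Vd R d] (Gbar G m (emp N y)).
Proof. exact: measurable_minr (meas_Gj1 N y m) (meas_Gj2 N y m). Qed.

Lemma Gj_gt0 N y m k u : (0 < N)%N -> 0 < Gj G m k (emp N y) u.
Proof. by move=> N0; rewrite Gj_eq divr_gt0 // eta_gt0. Qed.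

Lemma Gb_ge0 N y m v : (0 < N)%N -> 0 <= Gbar G m (emp N y) v.
Proof. by move=> N0; rewrite /Gbar le_min !ltW ?Gj_gt0. Qed.

Lemma Gb_le1 N y m v : Gbar G m (emp N y) v <= Gj G m 1 (emp N y) v.1.
Proof. by rewrite /Gbar ge_min lexx. Qed.

Lemma Gb_le2 N y m v : Gbar G m (emp N y) v <= Gj G m 2 (emp N y) v.2.
Proof. by rewrite /Gbar ge_min lexx orbT. Qed.

Lemma emp_eq N y (F : Vd R d -> \bar R) (g : Vd R d -> R) : measurable_fun setT g ->
  (forall v, F v = (g v)%:E) -> (\int[emp N y]_v F v)%E = (N%:R^-1 * \sum_(i < N) g (y i))%:E.
Proof. by move=> mg hF; rewrite (eq_integral (fun v => (g v)%:E)) ?emp_real // => v _; exact: hF. Qed.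

Lemma sumGj N y m k : (0 < N)%N -> N%:R^-1 * \sum_(i < N) Gj G m k (emp N y) (compj k (y i)) = 1.
Proof.
move=> N0; under eq_bigr do rewrite Gj_eq.
rewrite -mulr_suml mulrA -/(eta N y k m) divff //; exact: lt0r_neq0 (eta_gt0 _ _ _ N0).
Qed.

Lemma muR_w1 N y m : (0 < N)%N -> muR (emp N y) (fun v => Gj G m 1 (emp N y) v.1 - Gbar G m (emp N y) v) = 1 - muR (emp N y) (Gbar G m (emp N y)).
Proof.
move=> N0; rewrite /muR emp_real; last exact: measurable_funB (meas_Gj1 N y m) (meas_Gb N y m).
rewrite emp_real; last exact: meas_Gb.
by rewrite /= sumrB mulrBr (@sumGj N y m 1 N0).
Qed.

Lemma muR_w2 N y m : (0 < N)%N -> muR (emp N y) (fun v => Gj G m 2 (emp N y) v.2 - Gbar G m (emp N y) v) = 1 - muR (emp N y) (Gbar G m (emp N y)).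
Proof.
move=> N0; rewrite /muR emp_real; last exact: measurable_funB (meas_Gj2 N y m) (meas_Gb N y m).
rewrite emp_real; last exact: meas_Gb.
by rewrite /= sumrB mulrBr (@sumGj N y m 2 N0).
Qed.


Lemma mM d' (T : measurableType d') (f g : T -> R) : measurable_fun setT f -> measurable_fun setT g -> measurable_fun setT (fun x => f x * g x).
Proof. exact: measurable_funM. Qed.
Lemma mB d' (T : measurableType d') (f g : T -> R) : measurable_fun setT f -> measurable_fun setT g -> measurable_fun setT (fun x => f x - g x).
Proof. exact: measurable_funB. Qed.
Lemma mD d' (T : measurableType d') (f g : T -> R) : measurable_fun setT f -> measurable_fun setT g -> measurable_fun setT (fun x => f x + g x).
Proof. exact: measurable_funD. Qed.
Lemma mC d' (T : measurableType d') (c : R) : measurable_fun [set: T] (fun _ => c).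
Proof. exact: measurable_cst. Qed.
Lemma mfst (f : d.-tuple R -> R) : measurable_fun setT f -> measurable_fun [set: Vd R d] (fun v => f v.1).
Proof. by move=> mf; exact: measurableT_comp mf measurable_fst. Qed.
Lemma msnd (f : d.-tuple R -> R) : measurable_fun setT f -> measurable_fun [set: Vd R d] (fun v => f v.2).
Proof. by move=> mf; exact: measurableT_comp mf measurable_snd. Qed.

Ltac mfun := repeat first [ apply: mM | apply: mB | apply: mD | apply: mC | apply: meas_Gj1 | apply: meas_Gj2 | apply: meas_Gb | apply: mfst | apply: msnd | apply: hGmeas | assumption ].

Lemma term2 N y m j (LH : d.-tuple R -> R) : (0 < N)%N -> (j = 1%N \/ j = 2%N) -> measurable_fun setT LH ->
  ((if muR (emp N y) (Gbar G m (emp N y)) == 1%R then 0%R else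
     (1 - muR (emp N y) (Gbar G m (emp N y)))%:E *
     \int[emp N y]_v \int[emp N y]_w
           (((Gj G m 1 (emp N y) v.1 - Gbar G m (emp N y) v) /
             (1 - muR (emp N y) (Gbar G m (emp N y))) *
             ((Gj G m 2 (emp N y) w.2 - Gbar G m (emp N y) w) /
              (1 - muR (emp N y) (Gbar G m (emp N y)))))%:E *
            (LH (compj j (v.1, w.2)))%:E)) =
  (N%:R^-1 * \sum_(k < N) (Gj G m j (emp N y) (compj j (y k)) - Gbar G m (emp N y) (y k)) * LH (compj j (y k)))%:E)%E.
Proof.
move=> N0 hj mLH.
set s := muR (emp N y) (Gbar G m (emp N y)).
have hw1 : N%:R^-1 * \sum_(k < N) (Gj G m 1 (emp N y) (y k).1 - Gbar G m (emp N y) (y k)) = 1 - s.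
  rewrite -muR_w1 // /muR emp_real //; mfun.
have hw2 : N%:R^-1 * \sum_(k < N) (Gj G m 2 (emp N y) (y k).2 - Gbar G m (emp N y) (y k)) = 1 - s.
  rewrite -muR_w2 // /muR emp_real //; mfun.
have NR : N%:R != 0 :> R by rewrite pnatr_eq0 -lt0n.
have Ninv : N%:R^-1 != 0 :> R by rewrite invr_eq0.
case: ifPn => [/eqP s1|s1].
  have z1 : forall k : 'I_N, Gj G m 1 (emp N y) (y k).1 - Gbar G m (emp N y) (y k) = 0.
    move=> k; apply: (@psumr_eq0P R _ xpredT (fun k : 'I_N => Gj G m 1 (emp N y) (y k).1 - Gbar G m (emp N y) (y k)) _ _ k) => //.
      by move=> i _; rewrite subr_ge0 Gb_le1.
    by apply/eqP; move: hw1; rewrite s1 subrr => /eqP; rewrite mulf_eq0 (negbTE Ninv).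
  have z2 : forall k : 'I_N, Gj G m 2 (emp N y) (y k).2 - Gbar G m (emp N y) (y k) = 0.
    move=> k; apply: (@psumr_eq0P R _ xpredT (fun k : 'I_N => Gj G m 2 (emp N y) (y k).2 - Gbar G m (emp N y) (y k)) _ _ k) => //.
      by move=> i _; rewrite subr_ge0 Gb_le2.
    by apply/eqP; move: hw2; rewrite s1 subrr => /eqP; rewrite mulf_eq0 (negbTE Ninv).
  by case: hj => ->; rewrite big1 ?mulr0 // => k _; rewrite /compj /= ?z1 ?z2 mul0r.
have s1' : 1 - s != 0 by rewrite subr_eq0 eq_sym.
case: hj => ->.
- rewrite (@emp_eq N y _ (fun v => (Gj G m 1 (emp N y) v.1 - Gbar G m (emp N y) v) / (1 - s) * LH v.1)); last 2 first.
  + mfun.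
  + move=> v; rewrite (@emp_eq N y _ (fun w => ((Gj G m 1 (emp N y) v.1 - Gbar G m (emp N y) v) / (1 - s) / (1 - s) * LH v.1) * (Gj G m 2 (emp N y) w.2 - Gbar G m (emp N y) w))); last 2 first.
    * mfun.
    * by move=> w; rewrite /compj /= -EFinM; congr EFin; ring.
    congr EFin; rewrite -mulr_sumr mulrCA hw2; field.
    by rewrite s1'.
  rewrite -EFinM; congr EFin; rewrite mulrCA mulr_sumr; congr (_ * _).
  apply: eq_bigr => k _; rewrite /compj /=; field; by rewrite s1'.
- rewrite (@emp_eq N y _ (fun v => (Gj G m 1 (emp N y) v.1 - Gbar G m (emp N y) v) / (1 - s) / (1 - s) * (N%:R^-1 * \sum_(k < N) (Gj G m 2 (emp N y) (y k).2 - Gbar G m (emp N y) (y k)) * LH (y k).2))); last 2 first.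
  + mfun.
  + move=> v; rewrite (@emp_eq N y _ (fun w => ((Gj G m 1 (emp N y) v.1 - Gbar G m (emp N y) v) / (1 - s) / (1 - s)) * ((Gj G m 2 (emp N y) w.2 - Gbar G m (emp N y) w) * LH w.2))); last 2 first.
    * mfun.
    * by move=> w; rewrite /compj /= -EFinM; congr EFin; ring.
    by congr EFin; rewrite -mulr_sumr mulrCA.
  rewrite -EFinM; congr EFin.
  rewrite -mulr_suml -mulr_suml -mulr_suml.
  have key : forall W S : R, (1 - s) * (N%:R^-1 * (W / (1 - s) / (1 - s) * S)) = (N%:R^-1 * W) / (1 - s) * S.
    by move=> W S; field; rewrite s1' NR.
  rewrite key.
  by rewrite hw1 divff // mul1r.
Qed.

Lemma PhiInt_H n N y j (H LH : d.-tuple R -> R) : (1 <= n)%N -> (0 < N)%N -> (j = 1%N \/ j = 2%N) ->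
  measurable_fun setT H -> bounded_fun H -> measurable_fun setT LH ->
  (forall u, (\int[Mj j n u]_x (H x)%:E)%E = (LH u)%:E) ->
  PhiInt G M n (emp N y) (fun v => (H (compj j v))%:E) =
  (N%:R^-1 * \sum_(i < N) G n.-1 (compj j (y i)) * LH (compj j (y i)) / eta N y j n.-1)%:E.
Proof.
move=> n1 N0 hj mH bH mLH hLH.
have hK v : (\int[M n v]_z (H (compj j z))%:E)%E = (LH (compj j v))%:E by rewrite hmarg // hLH.
have mLHc : measurable_fun setT (fun v => LH (compj j v)) by exact: measurableT_comp mLH (meas_compj j).
rewrite /PhiInt.
rewrite (@emp_eq N y _ (fun v => Gbar G n.-1 (emp N y) v * LH (compj j v))); last 2 first.
  exact: measurable_funM (meas_Gb N y n.-1) mLHc.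
  by move=> v; rewrite hK -EFinM.
under eq_integral => v _ do under eq_integral => w _ do rewrite hK.
rewrite muR_w1 // muR_w2 // term2 // -EFinD; congr EFin.
rewrite -mulrDr -big_split; congr (_ * _); apply: eq_bigr => i _ /=.
rewrite Gj_eq; ring.
Qed.

Lemma one_s_ge0 N y m : (0 < N)%N -> 0 <= 1 - muR (emp N y) (Gbar G m (emp N y)).
Proof.
move=> N0; rewrite -muR_w1 //; apply: fine_ge0; apply: integral_ge0 => v _.
by rewrite lee_fin subr_ge0 Gb_le1.
Qed.

Lemma ratio1_ge0 N y m v : (0 < N)%N -> 0 <= (Gj G m 1 (emp N y) v.1 - Gbar G m (emp N y) v) / (1 - muR (emp N y) (Gbar G m (emp N y))).
Proof. by move=> N0; rewrite divr_ge0 ?one_s_ge0 // subr_ge0 Gb_le1. Qed.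

Lemma ratio2_ge0 N y m v : (0 < N)%N -> 0 <= (Gj G m 2 (emp N y) v.2 - Gbar G m (emp N y) v) / (1 - muR (emp N y) (Gbar G m (emp N y))).
Proof. by move=> N0; rewrite divr_ge0 ?one_s_ge0 // subr_ge0 Gb_le2. Qed.

Lemma PhiInt_pos n N y : (0 < N)%N -> Qpos (PhiInt G M n (emp N y)).
Proof.
move=> N0 F F0; rewrite /PhiInt muR_w1 // muR_w2 //.
apply: adde_ge0.
  apply: integral_ge0 => v _; apply: mule_ge0; first by rewrite lee_fin Gb_ge0.
  exact: integral_ge0.
case: ifP => _ //; apply: mule_ge0; first by rewrite lee_fin one_s_ge0.
apply: integral_ge0 => v _; apply: integral_ge0 => w _; apply: mule_ge0; last exact: integral_ge0.
by rewrite lee_fin mulr_ge0 ?ratio1_ge0 ?ratio2_ge0.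
Qed.

Lemma PhiInt_mono n N y : (0 < N)%N -> Qmono (PhiInt G M n (emp N y)).
Proof.
move=> N0 F1 F2 F0 F12; rewrite /PhiInt !(@muR_w1 N y n.-1 N0) !(@muR_w2 N y n.-1 N0).
apply: (@leeD R).
  apply: int_mono => v.
    apply: mule_ge0; first by rewrite lee_fin Gb_ge0.
    exact: integral_ge0.
  apply: (@lee_wpmul2l R); first by rewrite lee_fin Gb_ge0.
  exact: (int_mono _ F0 F12).
case: (muR (emp N y) (Gbar G n.-1 (emp N y)) == 1%R); first exact: lexx.
apply: (@lee_wpmul2l R); first by rewrite lee_fin one_s_ge0.
apply: int_mono => v.
  apply: integral_ge0 => w _; apply: mule_ge0; last exact: integral_ge0.
  by rewrite lee_fin mulr_ge0 ?ratio1_ge0 ?ratio2_ge0.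
apply: int_mono => w.
  apply: mule_ge0; last exact: integral_ge0.
  by rewrite lee_fin mulr_ge0 ?ratio1_ge0 ?ratio2_ge0.
apply: (@lee_wpmul2l R); first by rewrite lee_fin mulr_ge0 ?ratio1_ge0 ?ratio2_ge0.
exact: (int_mono _ F0 F12).
Qed.

Variable eta0 : probability (Vd R d) R.
Variable j : nat.
Hypothesis hj : j = 1%N \/ j = 2%N.
Variable c : R.
Hypothesis hc1 : 1 < c.
Hypothesis hcG : forall p x, c^-1 < G p x < c.

Definition Lk q (f : d.-tuple R -> R) u := Ex (Mj j q u) f.
Definition Qs q f u := G q.-1 u * Lk q f u.
Fixpoint Cc k p (f : d.-tuple R -> R) : d.-tuple R -> R :=
  match k with 0 => f | k'.+1 => fun u => G p u * Lk p.+1 (Cc k' p.+1 f) u end.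
Definition Gam p f := fine (\int[eta0]_v (Cc p 0 f (compj j v))%:E)%E.
Definition nice (f : d.-tuple R -> R) B := measurable_fun setT f /\ forall u, 0 <= f u <= B.

Lemma Gbnd p u : 0 <= G p u <= c.
Proof. by case/andP: (hcG p u) => _ h; rewrite (ltW h) ltW. Qed.

Lemma nice_B f B : nice f B -> 0 <= B.
Proof. by case=> _ h; case/andP: (h (ptV R d).1) => h1 h2; exact: le_trans h1 h2. Qed.

Lemma nice_bdd f B : nice f B -> bdd f.
Proof. by case=> _ h; exists B => u; case/andP: (h u) => h1 h2; rewrite ger0_norm. Qed.

Lemma Lk_meas q f B : nice f B -> measurable_fun setT (Lk q f).
Proof.
case=> mf hf; rewrite /Lk /Ex.
apply: (measurableT_comp (fine_measurable measurableT)).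
apply: (measurable_fun_integral_kernel (measurable_kernel (Mj j q))).
  by move=> z; rewrite lee_fin; case/andP: (hf z).
exact/measurable_EFinP.
Qed.

Lemma Lk_nice q f B : nice f B -> nice (Lk q f) B.
Proof.
move=> hn; split; first exact: Lk_meas hn.
move=> u; rewrite /Lk; case: hn => mf hf; apply: Ex_bnd => //; exact: prob_kernel.
Qed.

Lemma Lk_int q f B u : nice f B -> (\int[Mj j q u]_x (f x)%:E)%E = (Lk q f u)%:E.
Proof. move=> hn; rewrite /Lk intEx //; [exact: prob_kernel | by case: hn | exact: nice_bdd hn]. Qed.

Lemma Qs_nice q f B : nice f B -> nice (Qs q f) (c * B).
Proof.
move=> hn; split; first by apply: mM; [exact: hGmeas | exact: Lk_meas hn].
move=> u; case: (Lk_nice q hn) => _ /(_ u) /andP[l0 l1]; case/andP: (Gbnd q.-1 u) => g0 g1.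
by rewrite /Qs mulr_ge0 //= ler_pM.
Qed.

Lemma Cc_nice k p f B : nice f B -> nice (Cc k p f) (c ^+ k * B).
Proof.
move=> hn; elim: k p => [|k IH] p; first by rewrite expr0 mul1r.
have := Qs_nice p.+1 (IH p.+1); rewrite /Qs /= mulrA -exprS; by [].
Qed.

Lemma Cc_back k p f : Cc k.+1 p f = Cc k p (Qs (p + k).+1 f).
Proof.
elim: k p => [|k IH] p; first by rewrite addn0.
transitivity (fun u => G p u * Lk p.+1 (Cc k.+1 p.+1 f) u); first by [].
by rewrite IH addSnnS.
Qed.

Lemma Gam_S p f : Gam p.+1 f = Gam p (Qs p.+1 f).
Proof. by rewrite /Gam Cc_back add0n. Qed.

Lemma fk_eq k p u : fk G Mj j k.+1 p u = (Cc k p (G (p + k)%N) u)%:E.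
Proof.
elim: k p u => [|k IH] p u.
  by rewrite /= addn0 integral_cst // prob_kernel !mule1.
transitivity ((G p u)%:E * \int[Mj j p.+1 u]_x fk G Mj j k.+1 p.+1 x)%E; first by [].
under eq_integral do rewrite IH.
rewrite (Lk_int _ _ (Cc_nice k p.+1 (conj (hGmeas _) (fun x => Gbnd _ x)))) -EFinM addSnnS.
by [].
Qed.

Lemma gamma_eq n : (1 <= n)%N -> gamma eta0 G Mj n j = Gam n.-1 (G n.-1).
Proof.
case: n => [//|n] _; rewrite /gamma /Gam.
by under eq_integral do rewrite fk_eq add0n.
Qed.
Variable N : nat.
Hypothesis N0 : (0 < N)%N.

Definition etaN p (f : d.-tuple R -> R) (h : nat -> nat -> Vd R d) := N%:R^-1 * \sum_(i < N) f (compj j (h p i)).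
Definition AN p h := \prod_(q < p) etaN q (G q) h.
Definition gN p f h := AN p h * etaN p f h.

Lemma NR0 : N%:R != 0 :> R.
Proof. by rewrite pnatr_eq0 -lt0n. Qed.

Lemma avg_bnd (f : d.-tuple R -> R) B (x : nat -> Vd R d) : (forall u, 0 <= f u <= B) ->
  0 <= N%:R^-1 * \sum_(i < N) f (compj j (x i)) <= B.
Proof.
move=> hf; apply/andP; split.
  by apply: mulr_ge0; [rewrite invr_ge0 | apply: sumr_ge0 => i _; case/andP: (hf (compj j (x i)))].
apply: (@le_trans _ _ (N%:R^-1 * \sum_(i < N) B)).
  apply: ler_wpM2l; first by rewrite invr_ge0.
  by apply: ler_sum => i _; case/andP: (hf (compj j (x i))).
by rewrite sumr_const card_ord -[B *+ N]mulr_natl mulrA mulVf ?mul1r ?NR0.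
Qed.

Lemma AN_bnd p h : 0 <= AN p h <= c ^+ p.
Proof.
elim: p => [|p IH]; first by rewrite /AN big_ord0 expr0 lexx ler01.
rewrite /AN big_ord_recr /= -/(AN p h); case/andP: IH => a0 a1.
have := @avg_bnd (G p) c (h p) (fun u => Gbnd p u) => /andP[e0 e1].
by rewrite mulr_ge0 //= exprSr ler_pM.
Qed.

Lemma AN_upd p h x : AN p (upd h p x) = AN p h.
Proof.
rewrite /AN; apply: eq_bigr => q _; rewrite /etaN /upd.
by rewrite (ltn_eqF (ltn_ord q)).
Qed.

Lemma etaN_upd p f h x : etaN p f (upd h p x) = N%:R^-1 * rs (fun a => f (compj j a)) N 0 x.
Proof. by rewrite /etaN /upd eqxx /rs big_mkord. Qed.

Lemma gammaN_eq n h : gammaN G N n j h = AN n h.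
Proof. by rewrite /gammaN /AN; apply: eq_bigr => q _; rewrite muR_G. Qed.

Lemma quad_final T (Q : (T -> \bar R) -> \bar R) (g : T -> R) m e2 :
  (forall u0 u1 u2, Q (fun a => (u0 + u1 * g a + u2 * g a ^+ 2)%:E) = (u0 + u1 * m + u2 * e2)%:E) ->
  forall c0 lam b a x,
  intN Q N (fun x => (c0 + lam * (b * (N%:R^-1 * rs g N 0 x) + a) ^+ 2)%:E) x =
  (c0 + lam * (b * m + a) ^+ 2 + lam * b ^+ 2 * (e2 - m ^+ 2) / N%:R)%:E.
Proof.
move=> hQ c0 lam b a x.
rewrite (_ : (fun x => _) = fun x => ((c0 + lam * a ^+ 2) + (2 * lam * a * b / N%:R) * rs g N 0 x + (lam * b ^+ 2 / N%:R ^+ 2) * rs g N 0 x ^+ 2)%:E).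
  rewrite (intN_quad hQ) // rsN add0r; congr EFin; field; exact: NR0.
by apply: funext => y; congr EFin; field; exact: NR0.
Qed.

Definition mPh p (y : nat -> Vd R d) f := N%:R^-1 * \sum_(i < N) (G p (compj j (y i)) * Lk p.+1 f (compj j (y i)) / eta N y j p).

Lemma sumGeta p (y : nat -> Vd R d) : N%:R^-1 * \sum_(i < N) (G p (compj j (y i)) / eta N y j p) = 1.
Proof. by rewrite -[RHS](@sumGj N y p j N0); congr (_ * _); apply: eq_bigr => i _; rewrite Gj_eq. Qed.

Lemma nice_sq f B : nice f B -> nice (fun u => f u ^+ 2) (B ^+ 2).
Proof.
case=> mf hf; split.
  by under eq_fun do rewrite expr2; apply: mM.
move=> u; case/andP: (hf u) => h0 h1; rewrite sqr_ge0 /=.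
by rewrite ler_pXn2r // ?nnegrE // (le_trans h0 h1).
Qed.

Lemma bounded_of_bdd d' (T : measurableType d') (h : T -> R) : bdd h -> bounded_fun h.
Proof.
move=> [B hB]; exists B; split; first exact: num_real.
move=> M' hM x _ /=; exact: le_trans (hB x) (ltW hM).
Qed.

Lemma Qprop_phi p (y : nat -> Vd R d) f B : nice f B -> forall u0 u1 u2,
  PhiInt G M p.+1 (emp N y) (fun a => (u0 + u1 * f (compj j a) + u2 * f (compj j a) ^+ 2)%:E) =
  (u0 + u1 * mPh p y f + u2 * mPh p y (fun u => f u ^+ 2))%:E.
Proof.
move=> hn u0 u1 u2.
have hn2 := nice_sq hn.
case: (hn) => mf _; case: (hn2) => mf2 _.
have mH : measurable_fun setT (fun u => u0 + u1 * f u + u2 * f u ^+ 2) by mfun.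
have bH : bdd (fun u => u0 + u1 * f u + u2 * f u ^+ 2).
  by apply: bddD; [apply: bddD|]; try apply: bddM; try apply: bdd_cst; apply: nice_bdd; eassumption.
rewrite (@PhiInt_H p.+1 N y j (fun u => u0 + u1 * f u + u2 * f u ^+ 2) (fun u => u0 + u1 * Lk p.+1 f u + u2 * Lk p.+1 (fun u => f u ^+ 2) u)) //.
- congr EFin; rewrite /mPh /=.
  transitivity (u0 * (N%:R^-1 * \sum_(i < N) (G p (compj j (y i)) / eta N y j p)) + u1 * (N%:R^-1 * \sum_(i < N) (G p (compj j (y i)) * Lk p.+1 f (compj j (y i)) / eta N y j p)) + u2 * (N%:R^-1 * \sum_(i < N) (G p (compj j (y i)) * Lk p.+1 (fun u => f u ^+ 2) (compj j (y i)) / eta N y j p))); last by rewrite sumGeta mulr1.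
  rewrite !mulr_sumr -!big_split; apply: eq_bigr => i _ /=; ring.
- exact: bounded_of_bdd.
- by repeat first [apply: mD | apply: mM | apply: mC | apply: (Lk_meas _ hn) | apply: (Lk_meas _ hn2)].
- move=> u; rewrite Ex_quad //; [exact: prob_kernel | exact: nice_bdd hn].
Qed.
Lemma mPh_eq p h f : AN p.+1 h * mPh p (h p) f = gN p (Qs p.+1 f) h.
Proof.
rewrite /AN big_ord_recr /= -/(AN p h) /gN -mulrA; congr (_ * _).
rewrite /mPh /Qs /= -/(eta N (h p) j p) /etaN -/(eta N (h p) j p).
rewrite -mulr_suml mulrCA; congr (_ * _); rewrite mulrC -mulrA mulVf ?mulr1 //.
by apply: lt0r_neq0; apply: eta_gt0.
Qed.

Lemma mPh_bnd p (y : nat -> Vd R d) f B : nice f B -> 0 <= mPh p y f <= B.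
Proof.
move=> hn; have hE : 0 < eta N y j p by apply: eta_gt0.
apply/andP; split.
  rewrite /mPh mulr_ge0 ?invr_ge0 //; apply: sumr_ge0 => i _.
  case/andP: (Gbnd p (compj j (y i))) => g0 _; case: (Lk_nice p.+1 hn) => _ /(_ (compj j (y i))) /andP[l0 _].
  by apply: divr_ge0; [exact: mulr_ge0 | exact: ltW hE].
apply: (@le_trans _ _ (N%:R^-1 * \sum_(i < N) (B * (G p (compj j (y i)) / eta N y j p)))).
  apply: ler_wpM2l; first by rewrite invr_ge0.
  apply: ler_sum => i _.
  case/andP: (Gbnd p (compj j (y i))) => g0 _; case: (Lk_nice p.+1 hn) => _ /(_ (compj j (y i))) /andP[_ l1].
  rewrite [X in _ <= X]mulrC mulrAC; apply: ler_wpM2l; last exact: l1.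
  by apply: divr_ge0; [exact: g0 | exact: ltW hE].
by rewrite -mulr_sumr mulrCA sumGeta mulr1.
Qed.

Fixpoint Kc p : R := match p with 0 => 1 | p'.+1 => (c ^+ p'.+1) ^+ 2 + c ^+ 2 * Kc p' end.

Lemma bnd_aux (lam b C e m B Ninv : R) : 0 <= lam -> 0 <= b -> b <= C -> 0 <= e -> e <= B -> 0 <= m -> 0 <= Ninv ->
  lam * b * (e - m) * Ninv <= lam * C * B * Ninv.
Proof.
move=> l0 b0 bC e0 eB m0 N0'; apply: ler_wpM2r => //; rewrite -!mulrA; apply: ler_wpM2l => //.
apply: (@le_trans _ _ (b * e)); first by apply: ler_wpM2l => //; rewrite lerBlDr lerDl.
exact: ler_pM.
Qed.

Lemma main_ind p : forall f B, nice f B -> forall c0 lam, 0 <= c0 -> 0 <= lam ->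
  (Epart eta0 G M N p (fun h => (c0 + lam * (gN p f h - Gam p f) ^+ 2)%:E) <= (c0 + lam * Kc p * B ^+ 2 / N%:R)%:E)%E.
Proof.
elim: p => [|p IH] f B hn c0 lam c00 lam0.
- rewrite /Epart.
  have mfc : measurable_fun setT (fun a : Vd R d => f (compj j a)).
    by case: hn => mf _; exact: measurableT_comp mf (meas_compj j).
  have bfc : bdd (fun a : Vd R d => f (compj j a)).
    by case: (nice_bdd hn) => b hb; exists b => a; exact: hb.
  have hQ := fun u0 u1 u2 => @Ex_quad R _ _ eta0 (probability_setT eta0) (fun a => f (compj j a)) u0 u1 u2 mfc bfc.
  rewrite (_ : (fun x0 => run G M N 0 0 (fun _ => x0) _) = fun x0 => (c0 + lam * (1 * (N%:R^-1 * rs (fun a => f (compj j a)) N 0 x0) + - Gam 0 f) ^+ 2)%:E).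
    rewrite (quad_final (Q := fun F => (\int[eta0]_v F v)%E) hQ) lee_fin.
    have -> : Ex eta0 (fun a => f (compj j a)) = Gam 0 f by [].
    rewrite mul1r subrr expr0n mulr0 addr0 lerD2l /= mulr1.
    have e2b : 0 <= Ex eta0 (fun x => f (compj j x) ^+ 2) <= B ^+ 2.
      case: (nice_sq hn) => m2 h2; apply: Ex_bnd; first exact: probability_setT.
        exact: measurableT_comp m2 (meas_compj j).
      by move=> x; exact: h2.
    case/andP: e2b => e20 e2B.
    have := @bnd_aux lam 1 1 _ (Gam 0 f ^+ 2) (B ^+ 2) (N%:R^-1) lam0 ler01 (lexx _) e20 e2B (sqr_ge0 _).
    by rewrite expr1n !mulr1 invr_ge0 ler0n; apply.

  apply: funext => x0 /=; rewrite /gN /AN big_ord0 /etaN /rs big_mkord.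
  by [].
- rewrite EpartS.
  set c0' := c0 + lam * (c ^+ p.+1) ^+ 2 * B ^+ 2 / N%:R.
  have c0'0 : 0 <= c0'.
    by rewrite /c0' addr_ge0 // mulr_ge0 ?invr_ge0 // mulr_ge0 ?sqr_ge0 // mulr_ge0 // sqr_ge0.
  have step1 : (Epart eta0 G M N p (fun h' => intN (PhiInt G M p.+1 (emp N (h' p))) N (fun x => (c0 + lam * (gN p.+1 f (upd h' p.+1 x) - Gam p.+1 f) ^+ 2)%:E) (fun _ => ptV R d)) <= Epart eta0 G M N p (fun h => (c0' + lam * (gN p (Qs p.+1 f) h - Gam p (Qs p.+1 f)) ^+ 2)%:E))%E.
    apply: Epart_mono.
    + move=> n y; exact: PhiInt_mono.
    + move=> n y; exact: PhiInt_pos.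
    + move=> h; apply: intN_pos; first exact: PhiInt_pos.
      by move=> x; rewrite lee_fin addr_ge0 // mulr_ge0 // sqr_ge0.
    + move=> h.
      rewrite (_ : (fun x => _) = fun x => (c0 + lam * (AN p.+1 h * (N%:R^-1 * rs (fun a => f (compj j a)) N 0 x) + - Gam p.+1 f) ^+ 2)%:E); last first.
        by apply: funext => x; rewrite /gN AN_upd etaN_upd.
      rewrite (quad_final (Qprop_phi p (h p) hn)) lee_fin mPh_eq Gam_S.
      case/andP: (AN_bnd p.+1 h) => a0 a1.
      case/andP: (mPh_bnd p (h p) (nice_sq hn)) => e0 e1.
      have H : lam * AN p.+1 h ^+ 2 * (mPh p (h p) (fun u => f u ^+ 2) - mPh p (h p) f ^+ 2) / N%:R <= lam * (c ^+ p.+1) ^+ 2 * B ^+ 2 / N%:R.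
        apply: bnd_aux; rewrite ?sqr_ge0 ?invr_ge0 //.
        by rewrite ler_pXn2r // ?nnegrE // (le_trans a0 a1).
      rewrite /c0'; lra.
  apply: (le_trans step1).
  apply: le_trans (IH _ _ (Qs_nice p.+1 hn) c0' lam c0'0 lam0) _.
  rewrite lee_fin le_eqVlt; apply/orP; left; apply/eqP; rewrite /c0' /=; ring.
Qed.

Lemma final_bound n : (1 <= n)%N ->
  (Epart eta0 G M N n.-1 (fun h => ((gammaN G N n j h - gamma eta0 G Mj n j) ^+ 2)%:E) <= (Kc n.-1 * c ^+ 2 / N%:R)%:E)%E.
Proof.
move=> n1; rewrite (gamma_eq n1).
case: n n1 => [//|n] _ /=.
have nG : nice (G n) c := conj (hGmeas _) (fun u => Gbnd _ u).
have H := @main_ind n (G n) c nG 0 1 (lexx 0) ler01.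
rewrite add0r mul1r in H.
suff -> : (fun h => ((gammaN G N n.+1 j h - Gam n (G n)) ^+ 2)%:E) = (fun h => (0 + 1 * (gN n (G n) h - Gam n (G n)) ^+ 2)%:E) by [].
apply: funext => h; rewrite gammaN_eq /gN /AN big_ord_recr /= add0r mul1r.
by [].
Qed.

End Phi.

Unset Implicit Arguments.
Local Close Scope ereal_scope.

Theorem propositionB2 (R : realType) (d : nat)
  (G : nat -> d.-tuple R -> R)
  (eta0 : probability (Vd R d) R)
  (M : nat -> R.-pker (Vd R d) ~> (Vd R d))
  (Mj : nat -> nat -> R.-pker (Ud R d) ~> (Ud R d))
  (* potentials G_p : U -> (0, oo), measurable *)
  (hGpos : forall (p : nat) (u : d.-tuple R), 0 < G p u)
  (hGmeas : forall p : nat, measurable_fun [set: d.-tuple R] (G p))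
  (* M_{n,j} are the marginal kernels of M_n *)
  (hmarg : forall n : nat, (1 <= n)%N ->
     forall j : nat, (j = 1%N \/ j = 2%N) ->
     forall (v : Vd R d) (phi : d.-tuple R -> R),
       measurable_fun [set: d.-tuple R] phi -> bounded_fun phi ->
       (\int[M n v]_y (phi (compj j y))%:E = \int[Mj j n (compj j v)]_u (phi u)%:E)%E)
  (* (A1) *)
  (A1 : exists c C : R, 1 < c /\ 0 < C /\
     (forall (p : nat) (x : d.-tuple R), c^-1 < G p x < c) /\
     (forall (p : nat) (x x' : d.-tuple R), `|G p x - G p x'| <= C * dist x x'))
  (* (A2) *)
  (A2 : forall n : nat, (1 <= n)%N -> exists Cn : R, 0 < Cn /\
     forall (u u' : d.-tuple R) (j : nat), (j = 1%N \/ j = 2%N) ->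
     forall phi : d.-tuple R -> R, bounded_fun phi -> lipschitz_fun phi ->
       `|fine (\int[Mj j n u]_y (phi y)%:E) - fine (\int[Mj j n u']_y (phi y)%:E)|
         <= Cn * supnorm phi * dist u u') :
  forall n : nat, (1 <= n)%N ->
  exists Cn : R, forall N : nat, (1 <= N)%N ->
  forall j : nat, (j = 1%N \/ j = 2%N) ->
  (Epart eta0 G M N n.-1
     (fun h => ((gammaN G N n j h - gamma eta0 G Mj n j) ^+ 2)%:E)
   <= (Cn / N%:R)%:E)%E.
Proof.
move=> n n1.
case: A1 => c [C [hc1 [hC [hcG hlip]]]].
exists (Kc c n.-1 * c ^+ 2) => N N1 j hj.
exact: (final_bound hGpos hGmeas hmarg eta0 hj hcG N1 n1).
Qed.
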